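(* Let $G$ be a finite pruned graph. Then $\mathrm{cat}(G)=2$ if and only if $G\cong C_3$, $G\cong P_3$, or $G\cong P_4$.
   Context: Cat Herding is played on a simple graph $G$. The cat first places its token on a vertex. Then the players alternate, the herder moving first: the herder deletes one edge of the current graph, and then, unless the cat's current vertex has degree $0$ in the current graph, the cat moves its token along a path with at least one edge in the current graph to a different vertex. The cat is captured when its vertex has degree $0$ in the current graph, and the game ends; the score is the number of edges deleted. For a finite graph $G$ and $v\in V(G)$, $\mathrm{cat}(G,v)$ is the score under optimal play (herder minimizing, cat maximizing) when the cat starts at $v$, and $\mathrm{cat}(G)=\max_{v}\mathrm{cat}(G,v)$. $P_n$ denotes the path on $n$ vertices and $C_n$ the cycle on $n$ vertices. A pruned graph is a connected graph containing no configuration $x\sim y\sim z$ with $x\neq z$, $\deg(x)=\deg(z)=1$ and $\deg(y)\ge 3$ (i.e. every vertex of degree at least $3$ is adjacent to at most one leaf). *)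

(* Defs.v *)
From mathcomp Require Import all_boot.
Set Implicit Arguments. Unset Strict Implicit. Unset Printing Implicit Defensive.

Definition simple_graph (T : finType) (e : rel T) : Prop :=
  irreflexive e /\ symmetric e.

(* The "current graph" during play is a set E of ordered pairs (both
   orientations of each undirected edge are present). *)
Definition edges_of (T : finType) (e : rel T) : {set T * T} :=
  [set p | e p.1 p.2].

Definition degE (T : finType) (E : {set T * T}) (v : T) : nat :=
  #|[set u | (v, u) \in E]|.

Definition del_edge (T : finType) (E : {set T * T}) (p : T * T) : {set T * T} :=
  E :\ p :\ (p.2, p.1).

Definition adjE (T : finType) (E : {set T * T}) : rel T := fun a b => (a, b) \in E.

(* Value of the game with fuel n, current graph E, cat at v, herder to move.
   If v is isolated the cat is captured (score 0 further deletions).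
   Otherwise the herder picks an edge p (minimising); then if the cat's vertex
   is isolated the game ends, else the cat moves to any w <> v reachable from v
   in the current graph (maximising).  The identity n.+1 of the min is an upper
   bound for all values (the min ranges over a nonempty set). *)
Fixpoint catv (T : finType) (n : nat) (E : {set T * T}) (v : T) : nat :=
  match n with
  | 0 => 0
  | n'.+1 =>
    if degE E v == 0 then 0 else
    \big[minn/n'.+2]_(p in E)
      (1 + (let E' := del_edge E p in
            if degE E' v == 0 then 0 else
            \max_(w | (w != v) && connect (adjE E') v w) catv n' E' w))
  end.

(* cat(G, v): fuel #|E| suffices, since each round removes two ordered pairs. *)
Definition cat_v (T : finType) (e : rel T) (v : T) : nat :=
  catv #|edges_of e| (edges_of e) v.

Definition cat_num (T : finType) (e : rel T) : nat := \max_(v : T) cat_v e v.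

Definition gdeg (T : finType) (e : rel T) (v : T) : nat := #|[set u | e v u]|.

Definition graph_connected (T : finType) (e : rel T) : Prop :=
  forall x y : T, connect e x y.

Definition pruned (T : finType) (e : rel T) : Prop :=
  graph_connected e /\
  forall x y z : T, e x y -> e y z -> x != z ->
    ~ [/\ gdeg e x = 1, gdeg e z = 1 & 3 <= gdeg e y].

Definition path_rel (n : nat) : rel 'I_n :=
  fun i j => (i.+1 == j :> nat) || (j.+1 == i :> nat).

Definition cycle_rel (n : nat) : rel 'I_n :=
  fun i j => path_rel i j
    || ((i == 0 :> nat) && (j == n.-1 :> nat))
    || ((j == 0 :> nat) && (i == n.-1 :> nat)).

Definition graph_iso (T U : finType) (e : rel T) (f : rel U) : Prop :=
  exists g : T -> U, bijective g /\ forall x y, e x y = f (g x) (g y).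

(* Main.v *)
Require Import Defs.
From mathcomp Require Import all_boot.
Set Implicit Arguments. Unset Strict Implicit. Unset Printing Implicit Defensive.


Lemma bigmin_le (I : eqType) (r : seq I) (P : pred I) (F : I -> nat) x0 i0 :
  i0 \in r -> P i0 -> \big[minn/x0]_(i <- r | P i) F i <= F i0.
Proof.
elim: r => //= i r IH; rewrite inE big_cons => /orP [/eqP <-|Hr] Hp.
  by rewrite Hp geq_minl.
case: (P i); last exact: IH.
by apply: leq_trans (geq_minr _ _) (IH Hr Hp).
Qed.

Lemma bigmin_lef (I : finType) (P : pred I) (F : I -> nat) x0 i0 :
  P i0 -> \big[minn/x0]_(i | P i) F i <= F i0.
Proof. by move=> H; apply: bigmin_le => //; rewrite mem_index_enum. Qed.

Lemma le_bigmin (I : Type) (r : seq I) (P : pred I) (F : I -> nat) x0 m :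
  m <= x0 -> (forall i, P i -> m <= F i) -> m <= \big[minn/x0]_(i <- r | P i) F i.
Proof.
move=> H0 HF; apply: (big_ind (fun x => m <= x)) => //.
by move=> x y Hx Hy; rewrite leq_min Hx Hy.
Qed.

Lemma degE_del {T : finType} (E : {set T * T}) p v : degE E v <= (degE (del_edge E p) v).+1.
Proof.
rewrite /degE (cardsD1 (if p.1 == v then p.2 else p.1)).
rewrite -add1n leq_add ?leq_b1 //.
apply: subset_leq_card; apply/subsetP => x; rewrite !inE.
case/andP => Hx Hin; rewrite Hin andbT.
case: p Hx => a b /=; rewrite !xpair_eqE.
case: (eqVneq a v) => [->|Hav] Hx; rewrite ?eqxx /=.
  rewrite (negbTE Hx) /= andbT; apply/negP => /andP [/eqP Hbv /eqP Hxv].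
  by subst; rewrite eqxx in Hx.
by rewrite (negbTE Hx) andbF.
Qed.

Lemma catv_le1 {T : finType} n (E : {set T * T}) w : degE E w <= 1 -> catv n E w <= 1.
Proof.
case: n => [|n] //= H.
case: ifP => // H0.
have H1 : degE E w == 1 by rewrite eqn_leq H lt0n H0.
case/cards1P: H1 => y Hy.
have Hyin : (w, y) \in E.
  have : y \in [set u | (w, u) \in E] by rewrite Hy set11.
  by rewrite inE.
apply: leq_trans (@bigmin_lef _ (fun p => p \in E) _ _ _ Hyin) _.
rewrite /=.
suff -> : degE (del_edge E (w, y)) w == 0 by [].
rewrite cards_eq0; apply/eqP/setP => z; rewrite !inE /=.
apply/negP => /andP [Hz1 /andP [Hz2 Hz3]].
have : z \in [set u | (w, u) \in E] by rewrite inE.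
rewrite Hy inE => /eqP Hzy; subst z.
by rewrite eqxx in Hz2.
Qed.

Definition symE {T : finType} (E : {set T * T}) := forall x y, (x, y) \in E -> (y, x) \in E.
Definition irrE {T : finType} (E : {set T * T}) := forall x, (x, x) \notin E.

Lemma symE_del {T : finType} (E : {set T * T}) p : symE E -> symE (del_edge E p).
Proof.
move=> HS x y; rewrite !inE => /and3P [H1 H2 H3].
rewrite HS // andbT; case: p H1 H2 => a b /=; rewrite !xpair_eqE.
by move=> H1 H2; apply/andP; split; rewrite andbC.
Qed.

Lemma irrE_del {T : finType} (E : {set T * T}) p : irrE E -> irrE (del_edge E p).
Proof. by move=> HI x; rewrite !inE (negbTE (HI x)) !andbF. Qed.

Lemma catv_ge1 {T : finType} n (E : {set T * T}) w : symE E -> 1 <= n -> 1 <= degE E w -> 1 <= catv n E w.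
Proof.
case: n => [|n] //= _ _ H; have -> : (degE E w == 0) = false by case: (degE E w) H.
by apply: le_bigmin.
Qed.

Lemma catv_ge2 {T : finType} n (E : {set T * T}) w : symE E -> irrE E -> 2 <= n -> 2 <= degE E w -> 2 <= catv n E w.
Proof.
case: n => [|n] //= HS HI Hn H.
have -> : (degE E w == 0) = false by case: (degE E w) H.
apply: le_bigmin => // p Hp.
set E' := del_edge E p.
have H1 : 1 <= degE E' w by have := degE_del E p w; move=> /(leq_trans H); rewrite ltnS.
have -> : (degE E' w == 0) = false by case: (degE E' w) H1.
rewrite add1n ltnS.
have : 0 < #|[set u | (w, u) \in E']| by [].
case/card_gt0P => z; rewrite inE => Hz.
have Hzw : z != w by apply/eqP => Hzw; subst; have := irrE_del p HI w; rewrite Hz.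
apply: leq_trans (@leq_bigmax_cond _ _ _ z _) => /=.
  apply: catv_ge1; first exact: symE_del.
    by case: n Hn.
  apply/card_gt0P; exists w; rewrite inE; exact: symE_del.
by rewrite Hzw /=; apply: connect1.
Qed.


Definition goodb {T : finType} (E : {set T * T}) u := [exists p in E, [forall w,
  ((w != u) && connect (adjE (del_edge E p)) u w) ==> (degE (del_edge E p) w <= 1)]].

Lemma connect_out {T : finType} (r : rel T) x y : connect r x y -> x != y -> exists z, r x z.
Proof.
case/connectP => s; case: s => [|z s] /= Hp Hl; first by rewrite Hl eqxx.
by move=> _; exists z; case/andP: Hp.
Qed.

Lemma del_sub {T : finType} (E : {set T * T}) p x y : (x, y) \in del_edge E p -> (x, y) \in E.
Proof. by rewrite !inE => /and3P []. Qed.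

Lemma deg_pos {T : finType} (E : {set T * T}) x y : (x, y) \in E -> degE E x != 0.
Proof. by move=> H; rewrite -lt0n; apply/card_gt0P; exists y; rewrite inE. Qed.

Lemma catv_ge3 {T : finType} n (E : {set T * T}) u : symE E -> irrE E -> 3 <= n -> (exists p, p \in E) ->
  ~~ goodb E u -> 3 <= catv n E u.
Proof.
case: n => [|n] // HS HI Hn [p0 Hp0] Hg.
have Hng : forall p, p \in E -> exists w, [/\ w != u,
    connect (adjE (del_edge E p)) u w & 1 < degE (del_edge E p) w].
  move=> p Hp; move/existsPn: Hg => /(_ p); rewrite Hp /= => /forallPn [w].
  rewrite negb_imply -ltnNge => /andP [/andP [H1 H2] H3]; exists w; split => //.
have [w0 [Hw0 Hc0 _]] := Hng p0 Hp0.
have [z Hz] : exists z, adjE (del_edge E p0) u z.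
  by apply: (connect_out Hc0); rewrite eq_sym.
rewrite /= (negbTE (deg_pos (del_sub Hz))).
apply: le_bigmin => [|p Hp]; first exact: leq_trans Hn (leqnSn _).
have [w [Hw Hc Hd]] := Hng p Hp.
have [z' Hz'] : exists z, adjE (del_edge E p) u z.
  by apply: (connect_out Hc); rewrite eq_sym.
rewrite (negbTE (deg_pos Hz')) add1n ltnS.
apply: leq_trans (@leq_bigmax_cond _ _ _ w _) => /=; last by rewrite Hw Hc.
apply: catv_ge2 => //; [exact: symE_del | exact: irrE_del].
Qed.

Lemma catv_le2 {T : finType} n (E : {set T * T}) u : (exists2 p, p \in E & forall w, w != u -> degE (del_edge E p) w <= 1) ->
  catv n E u <= 2.
Proof.
case: n => [|n] //= [p Hp Hw].
case: ifP => // _.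
apply: leq_trans (@bigmin_lef _ (fun p => p \in E) _ _ _ Hp) _.
rewrite add1n ltnS; case: ifP => // _.
apply/bigmax_leqP => w /andP [Hwu _]; exact: catv_le1 (Hw w Hwu).
Qed.


Definition Fprops {T : finType} (e F : rel T) (a b : T) : Prop :=
  (forall x y, F x y -> e x y) /\
  (forall x y, e x y -> F x y \/ (x = a /\ y = b) \/ (x = b /\ y = a)).

Definition prunedN {T : finType} (e : rel T) : Prop :=
  forall x y z, e x y -> e y z -> x != z -> (forall w, e x w -> w = y) ->
    (forall w, e z w -> w = y) -> forall w, e y w -> w = x \/ w = z.

Definition leafy {T : finType} (e : rel T) (u : T) : Prop :=
  exists l x, [/\ l != x, e u l, e u x, (forall y, e u y -> y = l \/ y = x)
    & forall y, e l y -> y = u].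

Definition starA {T : finType} (e : rel T) (u : T) : Prop :=
  exists a b, [/\ a != b, e u a, e u b, e a b & forall z, z = u \/ e u z] /\
   forall x y, e x y -> [\/ x = u, y = u, (x = a /\ y = b) | (x = b /\ y = a)].

Lemma neq_of {T : finType} (e : rel T) x y : irreflexive e -> e x y -> x != y.
Proof. by move=> Hi H; apply/eqP => E; subst; rewrite Hi in H. Qed.

Lemma closure_all {T : finType} (e : rel T) (P : pred T) u :
  (forall x y, connect e x y) -> P u -> (forall x y, P x -> e x y -> P y) -> forall z, P z.
Proof.
move=> Hc Pu Hcl z; case/connectP: (Hc u z) => s.
elim: s u Pu => [|y s IH] u Pu /=; first by move=> _ ->.
by case/andP => Huy Hp Hl; apply: (IH y (Hcl _ _ Pu Huy) Hp Hl).
Qed.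

Lemma leafy_core {T : finType} (e : rel T) u x v1 v2 :
  irreflexive e -> symmetric e -> prunedN e -> e u x -> v1 != v2 -> e u v1 -> e u v2 ->
  (forall y, e u y -> y != x -> forall z, e y z -> z = u) -> leafy e u.
Proof.
move=> Hi Hs Hp Hux Hv Hv1 Hv2 Hleaf.
have [l [Hl Hlx]] : exists l, e u l /\ l != x.
  case: (eqVneq v1 x) => [E|H]; last by exists v1.
  by exists v2; split => //; rewrite -E eq_sym.
exists l, x; split => //; last exact: Hleaf.
move=> y Hy; case: (eqVneq y x) => [->|Hyx]; first by right.
case: (eqVneq y l) => [->|Hyl]; first by left.
have Hlu : e l u by rewrite Hs.
have Hly : l != y by rewrite eq_sym.
have := Hp l u y Hlu Hy Hly (Hleaf l Hl Hlx) (Hleaf y Hy Hyx) x Hux.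
by case => E; [move: Hlx | move: Hyx]; rewrite E eqxx.
Qed.

Lemma caseII {T : finType} (e F : rel T) u b v1 v2 :
  irreflexive e -> symmetric e -> prunedN e -> Fprops e F u b ->
  (forall w y, F u w -> F w y -> y = u) -> e u b ->
  v1 != v2 -> e u v1 -> e u v2 -> leafy e u.
Proof.
move=> Hi Hs Hp [F1 F2] Hst Hub Hv Hv1 Hv2.
apply: (leafy_core Hi Hs Hp Hub Hv Hv1 Hv2) => y Hy Hyb z Hz.
have Fuy : F u y.
  case: (F2 _ _ Hy) => [//|[[_ E]|[E _]]]; first by rewrite E eqxx in Hyb.
  by move: (neq_of Hi Hub); rewrite -E eqxx.
case: (F2 _ _ Hz) => [Fyz|[[E _]|[E _]]]; first exact: Hst Fuy Fyz.
  by move: (neq_of Hi Hy); rewrite E eqxx.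
by rewrite E eqxx in Hyb.
Qed.

Lemma caseIII {T : finType} (e F : rel T) u a b v1 v2 :
  irreflexive e -> symmetric e -> prunedN e -> Fprops e F a b ->
  (forall w y, F u w -> F w y -> y = u) -> F u a -> b != u -> ~~ F u b ->
  v1 != v2 -> e u v1 -> e u v2 -> leafy e u.
Proof.
move=> Hi Hs Hp [F1 F2] Hst Hua Hbu Hnb Hv Hv1 Hv2.
have Hau : a != u by rewrite eq_sym; exact: neq_of Hi (F1 _ _ Hua).
have nbr : forall y, e u y -> F u y.
  move=> y Hy; case: (F2 _ _ Hy) => [//|[[E _]|[E _]]].
    by rewrite E eqxx in Hau.
  by rewrite E eqxx in Hbu.
apply: (leafy_core Hi Hs Hp (F1 _ _ Hua) Hv Hv1 Hv2) => y Hy Hya z Hz.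
case: (F2 _ _ Hz) => [Fyz|[[E _]|[E _]]]; first exact: Hst (nbr _ Hy) Fyz.
  by rewrite E eqxx in Hya.
by subst y; rewrite (nbr _ Hy) in Hnb.
Qed.

Lemma caseI {T : finType} (e F : rel T) u a b :
  irreflexive e -> (forall x y, connect e x y) -> Fprops e F a b ->
  (forall w y, F u w -> F w y -> y = u) -> F u a -> F u b -> e a b -> starA e u.
Proof.
move=> Hi Hc [F1 F2] Hst Hua Hub Hab.
have Hau : a != u by rewrite eq_sym; exact: neq_of Hi (F1 _ _ Hua).
have Hbu : b != u by rewrite eq_sym; exact: neq_of Hi (F1 _ _ Hub).
have nbr : forall y, e u y -> F u y.
  move=> y Hy; case: (F2 _ _ Hy) => [//|[[E _]|[E _]]].
    by rewrite E eqxx in Hau.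
  by rewrite E eqxx in Hbu.
have HP : forall z, (z == u) || F u z.
  apply: (@closure_all _ e (fun z => (z == u) || F u z) u Hc); first by rewrite eqxx.
  move=> x y /orP [/eqP ->|Hx] Hxy; first by rewrite nbr ?orbT.
  case: (F2 _ _ Hxy) => [Fxy|[[_ ->]|[_ ->]]]; last 2 first.
  - by rewrite Hub orbT.
  - by rewrite Hua orbT.
  by rewrite (Hst _ _ Hx Fxy) eqxx.
exists a, b; split.
  split => //; [exact: neq_of Hi Hab | exact: F1 | exact: F1 |].
  by move=> z; case/orP: (HP z) => [/eqP ->|/F1 H]; [left|right].
move=> x y Hxy; case/orP: (HP x) => [/eqP ->|Hx]; first by constructor 1.
case: (F2 _ _ Hxy) => [Fxy|[H|H]]; last 2 first.
- by constructor 3.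
- by constructor 4.
by constructor 2; exact: Hst Hx Fxy.
Qed.

Lemma caseNone {T : finType} (e F : rel T) u a b :
  (forall x y, connect e x y) -> Fprops e F a b ->
  (forall w y, F u w -> F w y -> y = u) -> a != u -> b != u -> ~~ F u a -> ~~ F u b -> False.
Proof.
move=> Hc [F1 F2] Hst Hau Hbu Hna Hnb.
have nbr : forall y, e u y -> F u y.
  move=> y Hy; case: (F2 _ _ Hy) => [//|[[E _]|[E _]]].
    by rewrite E eqxx in Hau.
  by rewrite E eqxx in Hbu.
have HP : forall z, (z == u) || F u z.
  apply: (@closure_all _ e (fun z => (z == u) || F u z) u Hc); first by rewrite eqxx.
  move=> x y /orP [/eqP ->|Hx] Hxy; first by rewrite nbr ?orbT.
  case: (F2 _ _ Hxy) => [Fxy|[[E _]|[E _]]]; last 2 first.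
  - by subst x; rewrite Hx in Hna.
  - by subst x; rewrite Hx in Hnb.
  by rewrite (Hst _ _ Hx Fxy) eqxx.
by case/orP: (HP a) => [H|H]; [rewrite H in Hau | rewrite H in Hna].
Qed.

Lemma Fprops_sym {T : finType} (e F : rel T) a b : Fprops e F a b -> Fprops e F b a.
Proof.
case=> F1 F2; split => // x y /F2; tauto.
Qed.

Lemma Lu {T : finType} (e F : rel T) u a b v1 v2 :
  irreflexive e -> symmetric e -> (forall x y, connect e x y) -> prunedN e ->
  Fprops e F a b -> e a b ->
  (forall w y, F u w -> F w y -> y = u) ->
  v1 != v2 -> e u v1 -> e u v2 -> starA e u \/ leafy e u.
Proof.
move=> Hi Hs Hc Hp HF Hab Hst Hv Hv1 Hv2.
case: (eqVneq u a) => [E|Hua].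
  by subst; right; apply: (caseII Hi Hs Hp HF Hst Hab Hv Hv1 Hv2).
case: (eqVneq u b) => [E|Hub].
  by subst; right; apply: (caseII Hi Hs Hp (Fprops_sym HF) Hst _ Hv Hv1 Hv2); rewrite Hs.
case Fa: (F u a); case Fb: (F u b).
- by left; apply: (caseI Hi Hc HF Hst Fa Fb Hab).
- by right; apply: (caseIII Hi Hs Hp HF Hst Fa _ _ Hv Hv1 Hv2); rewrite ?Fb // eq_sym.
- by right; apply: (caseIII Hi Hs Hp (Fprops_sym HF) Hst Fb _ _ Hv Hv1 Hv2); rewrite ?Fa // eq_sym.
- exfalso; apply: (caseNone Hc HF Hst); rewrite ?Fa ?Fb // eq_sym //.
Qed.

Definition isC3 {T : finType} (e : rel T) : Prop :=
  exists u a b : T, [/\ u != a, u != b, a != b & forall z, [|| z == u, z == a | z == b]] /\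
    forall x y, e x y = (x != y).

Definition isP3 {T : finType} (e : rel T) : Prop :=
  exists l u x : T, [/\ l != u, u != x, l != x & forall z, [|| z == l, z == u | z == x]] /\
    [/\ forall z, e l z = (z == u), forall z, e u z = (z == l) || (z == x)
      & forall z, e x z = (z == u)].

Definition isP4 {T : finType} (e : rel T) : Prop :=
  exists l u x y : T, [/\ [&& l != u, l != x, l != y, u != x, u != y & x != y]
    & forall z, [|| z == l, z == u, z == x | z == y]] /\
    [/\ forall z, e l z = (z == u), forall z, e u z = (z == l) || (z == x),
        forall z, e x z = (z == u) || (z == y) & forall z, e y z = (z == x)].

Lemma nbr1 {T : finType} (e : rel T) v a : e v a -> (forall y, e v y -> y = a) ->
  forall z, e v z = (z == a).
Proof. by move=> H1 H2 z; apply/idP/eqP => [/H2|->]. Qed.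

Lemma nbr2 {T : finType} (e : rel T) v a b : e v a -> e v b ->
  (forall y, e v y -> y = a \/ y = b) -> forall z, e v z = (z == a) || (z == b).
Proof. by move=> H1 H2 H3 z; apply/idP/orP => [/H3 [->|->]|[/eqP->|/eqP->]]; rewrite ?eqxx; auto. Qed.

Lemma classify {T : finType} (e : rel T) :
  irreflexive e -> symmetric e -> (forall x y, connect e x y) -> prunedN e ->
  (forall u v1 v2, v1 != v2 -> e u v1 -> e u v2 -> starA e u \/ leafy e u) ->
  (exists u v1 v2, [/\ v1 != v2, e u v1 & e u v2]) ->
  isC3 e \/ isP3 e \/ isP4 e.
Proof.
move=> Hi Hs Hc Hp HL [u [v1 [v2 [Hv Hv1 Hv2]]]].
case: (HL u v1 v2 Hv Hv1 Hv2).
- case=> a [b [[Hab Hua Hub Heab Hall] Hed]].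
  have Hau : a != u by rewrite eq_sym; exact: neq_of Hi Hua.
  have Hbu : b != u by rewrite eq_sym; exact: neq_of Hi Hub.
  have Nu : forall y, e u y -> y = a \/ y = b.
    move=> c Hc'; case: (eqVneq c a) => [->|Hca]; first by left.
    case: (eqVneq c b) => [->|Hcb]; first by right.
    exfalso.
    have Hcu : c != u by rewrite eq_sym; exact: neq_of Hi Hc'.
    have Hac : e a c -> False.
      case/Hed => [E|E|[_ E]|[E _]]; [by rewrite E eqxx in Hau | by rewrite E eqxx in Hcu
        | by rewrite E eqxx in Hcb | by rewrite E eqxx in Hab].
    have Hbu' : u != b by rewrite eq_sym.
    case: (HL a u b Hbu' _ Heab); first by rewrite Hs.
    + case=> a' [b' [[_ _ _ _ Hall'] _]].
      by case: (Hall' c) => [E|]; [rewrite E eqxx in Hca | exact: Hac].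
    + case=> l [x [_ Hal _ _ Hleaf]].
      case/Hed: Hal => [E|E|[_ E]|[E _]].
      * by rewrite E eqxx in Hau.
      * by subst l; move: (Hleaf _ Hub) => E; rewrite E eqxx in Hab.
      * by subst l; move: (Hleaf u); rewrite Hs => /(_ Hub) E; rewrite E eqxx in Hau.
      * by rewrite E eqxx in Hab.
  left; exists u, a, b; split.
    split; [by rewrite eq_sym|by rewrite eq_sym|done|].
    by move=> z; case: (Hall z) => [->|/Nu [->|->]]; rewrite eqxx ?orbT.
  have Hall3 : forall z, z = u \/ z = a \/ z = b.
    by move=> z; case: (Hall z) => [->|/Nu [->|->]]; auto.
  move=> x y; apply/idP/idP => [/(neq_of Hi)//|].
  by case: (Hall3 x) => [->|[->|->]]; case: (Hall3 y) => [->|[->|->]];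
    rewrite ?eqxx //= => _; rewrite ?Hua ?Hub ?Heab // Hs ?Hua ?Hub ?Heab.
case=> l [x [Hlx Hul Hux Nu Hleaf]].
have Hlu : e l u by rewrite Hs.
have Hxu : e x u by rewrite Hs.
have nlu : l != u by exact: neq_of Hi Hlu.
have nux : u != x by exact: neq_of Hi Hux.
case: (boolP [exists y, (y != u) && e x y]).
- case/existsP => y /andP [Hyu Hxy].
  have Huy : u != y by rewrite eq_sym.
  case: (HL x u y Huy Hxu Hxy).
  + case=> a' [b' [[_ _ _ _ Hall'] _]].
    case: (Hall' l) => [E|Hxl]; first by rewrite E eqxx in Hlx.
    have := Hleaf x; rewrite Hs => /(_ Hxl) E.
    by rewrite E eqxx in nux.
  + case=> l2 [x2 [Hl2x2 Hxl2 Hxx2 Nx Hleaf2]].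
    have Ex2 : u = x2.
      case: (Nx u Hxu) => // E; subst l2.
      by move: (Hleaf2 l Hul) => E; rewrite E eqxx in Hlx.
    subst x2.
    have Ey : y = l2 by case: (Nx y Hxy) => // E; rewrite E eqxx in Hyu.
    subst l2.
    have Hyx : e y x by rewrite Hs.
    have nly : l != y.
      by apply/eqP => E; subst l; move: (Hleaf x Hyx) => E; rewrite E eqxx in nux.
    have nxy : x != y by exact: neq_of Hi Hxy.
    right; right; exists l, u, x, y; split; last split.
    * split; first by rewrite nlu Hlx nly nux Huy nxy.
      apply: (@closure_all _ e (fun z => [|| z == l, z == u, z == x | z == y]) u Hc);
        first by rewrite eqxx orbT.
      move=> a b /or4P [] /eqP -> Hab.
      -- by rewrite (Hleaf _ Hab) eqxx orbT.
      -- by case: (Nu _ Hab) => ->; rewrite eqxx ?orbT.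
      -- by case: (Nx _ Hab) => ->; rewrite eqxx ?orbT.
      -- by rewrite (Hleaf2 _ Hab) eqxx !orbT.
    * exact: nbr1 Hlu Hleaf.
    * exact: nbr2 Hul Hux Nu.
    * apply: nbr2 Hxu Hxy _ => z /Nx; tauto.
    * exact: nbr1 Hyx Hleaf2.
- move=> /existsPn Hno.
  have Nx : forall z, e x z -> z = u.
    by move=> z Hz; move: (Hno z); rewrite Hz andbT negbK => /eqP.
  right; left; exists l, u, x; split; last split.
  + split => //.
    apply: (@closure_all _ e (fun z => [|| z == l, z == u | z == x]) u Hc);
      first by rewrite eqxx orbT.
    move=> a b /or3P [] /eqP -> Hab.
    * by rewrite (Hleaf _ Hab) eqxx orbT.
    * by case: (Nu _ Hab) => ->; rewrite eqxx ?orbT.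
    * by rewrite (Nx _ Hab) eqxx orbT.
  + exact: nbr1 Hlu Hleaf.
  + exact: nbr2 Hul Hux Nu.
  + exact: nbr1 Hxu Nx.
Qed.
Definition Fr {X : finType} (r : rel X) (a b x y : X) := [&& r x y, (x,y) != (a,b) & (x,y) != (b,a)].
Definition c1b {X : finType} (r : rel X) (s : seq X) := has (fun u => has (fun v1 => has (fun v2 => [&& v1 != v2, r u v1 & r u v2]) s) s) s.
Definition c2b {X : finType} (r : rel X) (s : seq X) := all (fun u => has (fun a => has (fun b => r a b && all (fun w => (w != u) ==> all (fun z1 => all (fun z2 => (Fr r a b w z1 && Fr r a b w z2) ==> (z1 == z2)) s) s) s) s) s) s.
Definition s4 : seq 'I_4 := [:: @Ordinal 4 0 isT; @Ordinal 4 1 isT; @Ordinal 4 2 isT; @Ordinal 4 3 isT].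
Definition s3 : seq 'I_3 := [:: @Ordinal 3 0 isT; @Ordinal 3 1 isT; @Ordinal 3 2 isT].
Lemma s4P i : i \in s4. Proof. by case: i => [[|[|[|[|]]]] Hi]. Qed.
Lemma s3P i : i \in s3. Proof. by case: i => [[|[|[|]]] Hi]. Qed.

Lemma c1_transfer {T X : finType} (e : rel T) (f : rel X) s :
  graph_iso e f -> c1b f s -> exists u v1 v2, [/\ v1 != v2, e u v1 & e u v2].
Proof.
case=> g [[h gK hK] He] /hasP [u _ /hasP [v1 _ /hasP [v2 _ /and3P [H1 H2 H3]]]].
exists (h u), (h v1), (h v2); rewrite !He !hK; split => //.
by apply: contra H1 => /eqP /(can_inj hK) ->.
Qed.

Lemma c2_transfer {T X : finType} (e : rel T) (f : rel X) s :
  (forall x, x \in s) -> graph_iso e f -> c2b f s ->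
  forall u, exists a b, e a b /\ forall w z1 z2, w != u -> Fr e a b w z1 -> Fr e a b w z2 -> z1 = z2.
Proof.
move=> Hs [g [[h gK hK] He]] /allP H u.
case/hasP: (H (g u) (Hs _)) => a _ /hasP [b _ /andP [Hab /allP Hw]].
have Eq : forall x y, (x == h y) = (g x == y).
  by move=> x y; apply/eqP/eqP => [->|<-]; rewrite ?hK ?gK.
exists (h a), (h b); rewrite He !hK; split => // w z1 z2 Hwu F1 F2.
have Hgw : g w != g u by apply: contra Hwu => /eqP /(can_inj gK) ->.
move: (Hw (g w) (Hs _)); rewrite Hgw /= => /allP /(_ (g z1) (Hs _)) /allP /(_ (g z2) (Hs _)).
move: F1 F2; rewrite /Fr !He !xpair_eqE !Eq => -> -> /= /eqP.
exact: (can_inj gK).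
Qed.

Lemma iso_of_seq {T : finType} (e : rel T) n (f : rel 'I_n.+1) (s : seq T) x0 :
  size s = n.+1 -> uniq s -> (forall z, z \in s) ->
  (forall i j : 'I_n.+1, e (nth x0 s i) (nth x0 s j) = f i j) -> graph_iso e f.
Proof.
move=> Hsz Hu Hall Hf.
pose g (z : T) : 'I_n.+1 := inord (index z s).
pose h (i : 'I_n.+1) : T := nth x0 s i.
have gK : cancel g h.
  by move=> z; rewrite /g /h inordK ?nth_index // -Hsz index_mem.
have hK : cancel h g.
  by move=> i; apply: val_inj; rewrite /g /h /= index_uniq ?inordK // Hsz.
exists g; split; first by exists h.
by move=> x y; rewrite -Hf -/(h _) -/(h (g y)) !gK.
Qed.

Lemma isoC3 {T : finType} (e : rel T) : isC3 e -> graph_iso e (@cycle_rel 3).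
Proof.
case=> u [a [b [[Hua Hub Hab Hall] Hrel]]].
have Hau : a != u by rewrite eq_sym. have Hbu : b != u by rewrite eq_sym.
have Hba : b != a by rewrite eq_sym.
apply: (@iso_of_seq _ e 2 _ [:: u; a; b] u) => //.
- by rewrite /= !inE negb_or Hua Hub Hab.
- by move=> z; rewrite !inE.
- move=> i j; rewrite Hrel.
  by case: i => [[|[|[|]]] Hi] //; case: j => [[|[|[|]]] Hj] //=;
    rewrite ?eqxx ?Hua ?Hub ?Hab ?Hau ?Hbu ?Hba.
Qed.

Lemma isoP3 {T : finType} (e : rel T) : isP3 e -> graph_iso e (@path_rel 3).
Proof.
case=> l [u [x [[Hlu Hux Hlx Hall] [El Eu Ex]]]].
have dlu := negbTE Hlu. have dux := negbTE Hux. have dlx := negbTE Hlx.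
have dul : (u == l) = false by rewrite eq_sym.
have dxu : (x == u) = false by rewrite eq_sym.
have dxl : (x == l) = false by rewrite eq_sym.
apply: (@iso_of_seq _ e 2 _ [:: l; u; x] l) => //.
- by rewrite /= !inE negb_or Hlu Hlx Hux.
- by move=> z; rewrite !inE.
- move=> i j.
  by case: i => [[|[|[|]]] Hi] //; case: j => [[|[|[|]]] Hj] //=;
    rewrite ?El ?Eu ?Ex ?eqxx ?dlu ?dux ?dlx ?dul ?dxu ?dxl.
Qed.

Lemma isoP4 {T : finType} (e : rel T) : isP4 e -> graph_iso e (@path_rel 4).
Proof.
case=> l [u [x [y [[Hd Hall] [El Eu Ex Ey]]]]].
case/and5P: Hd => Hlu Hlx Hly Hux /andP [Huy Hxy].
have dlu := negbTE Hlu. have dux := negbTE Hux. have dlx := negbTE Hlx.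
have dly := negbTE Hly. have duy := negbTE Huy. have dxy := negbTE Hxy.
have dul : (u == l) = false by rewrite eq_sym.
have dxu : (x == u) = false by rewrite eq_sym.
have dxl : (x == l) = false by rewrite eq_sym.
have dyl : (y == l) = false by rewrite eq_sym.
have dyu : (y == u) = false by rewrite eq_sym.
have dyx : (y == x) = false by rewrite eq_sym.
apply: (@iso_of_seq _ e 3 _ [:: l; u; x; y] l) => //.
- by rewrite /= !inE !negb_or Hlu Hlx Hly Hux Huy Hxy.
- by move=> z; rewrite !inE.
- move=> i j.
  by case: i => [[|[|[|[|]]]] Hi] //; case: j => [[|[|[|[|]]]] Hj] //=;
    rewrite ?El ?Eu ?Ex ?Ey ?eqxx ?dlu ?dux ?dlx ?dul ?dxu ?dxl ?dly ?duy ?dxy ?dyl ?dyu ?dyx.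
Qed.

Lemma deg_eq {T : finType} (e : rel T) v : degE (edges_of e) v = gdeg e v.
Proof. by rewrite /degE /gdeg; apply: eq_card => z; rewrite !inE. Qed.

Lemma del_Fr {T : finType} (e : rel T) a b w z :
  ((w, z) \in del_edge (edges_of e) (a, b)) = Fr e a b w z.
Proof. by rewrite /Fr !inE /=; case: (e w z); rewrite /= ?andbF ?andbT // andbC. Qed.

Lemma symE_edges {T : finType} (e : rel T) : symmetric e -> symE (edges_of e).
Proof. by move=> Hs x y; rewrite !inE /= Hs. Qed.

Lemma irrE_edges {T : finType} (e : rel T) : irreflexive e -> irrE (edges_of e).
Proof. by move=> Hi x; rewrite !inE /= Hi. Qed.

Lemma prunedN_of {T : finType} (e : rel T) : simple_graph e -> pruned e -> prunedN e.
Proof.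
move=> [Hi Hs] [_ Hp] x y z Hxy Hyz Hxz Lx Lz w Hyw.
case: (eqVneq w x) => [->|Hwx]; first by left.
case: (eqVneq w z) => [->|Hwz]; first by right.
exfalso; apply: (Hp x y z Hxy Hyz Hxz); split.
- rewrite /gdeg (_ : [set u | e x u] = [set y]) ?cards1 //.
  by apply/setP => t; rewrite !inE; apply/idP/eqP => [/Lx|->].
- rewrite /gdeg (_ : [set u | e z u] = [set y]) ?cards1 //.
  by apply/setP => t; rewrite !inE; apply/idP/eqP => [/Lz|->]; rewrite // Hs.
- apply/card_gt2P; exists x, z, w; rewrite !inE Hyz Hyw Hs Hxy; split => //.
  by split => //; rewrite eq_sym.
Qed.

Lemma card_E3 {T : finType} (e : rel T) u v1 v2 :
  symmetric e -> irreflexive e -> v1 != v2 -> e u v1 -> e u v2 -> 3 <= #|edges_of e|.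
Proof.
move=> Hs Hi Hv H1 H2.
have Huv1 : u != v1 by exact: neq_of Hi H1.
apply/card_gt2P; exists (u, v1), (u, v2), (v1, u); rewrite !inE /= H1 H2 Hs H1.
split => //; rewrite !xpair_eqE eqxx /= Hv; split => //.
  by rewrite (negbTE Huv1).
by rewrite eq_sym (negbTE Huv1).
Qed.

Lemma goodb_graph {T : finType} (e : rel T) u :
  symmetric e -> irreflexive e -> goodb (edges_of e) u ->
  exists a b, [/\ e a b, Fprops e (adjE (del_edge (edges_of e) (a, b))) a b &
    forall w y, adjE (del_edge (edges_of e) (a, b)) u w ->
                adjE (del_edge (edges_of e) (a, b)) w y -> y = u].
Proof.
move=> Hs Hi /existsP [[a b] /andP [Hp /forallP Hf]].
have Hab : e a b by move: Hp; rewrite inE.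
exists a, b; split => //.
  split; first by move=> x y; rewrite /adjE => /del_sub; rewrite inE.
  move=> x y Hxy; rewrite /adjE /= del_Fr /Fr Hxy /= !xpair_eqE.
  case: (boolP ((x == a) && (y == b))) => [/andP [/eqP -> /eqP ->]|H1]; first by right; left.
  case: (boolP ((x == b) && (y == a))) => [/andP [/eqP -> /eqP ->]|H2]; first by right; right.
  by left; apply/andP.
move=> w y Huw Hwy.
have Hwu : w != u.
  by rewrite eq_sym; apply/eqP => E; subst w; move: (irrE_del (a, b) (irrE_edges Hi) u); rewrite /adjE in Huw; rewrite Huw.
have := Hf w; rewrite Hwu /= connect1 //= => /card_le1_eqP H.
have Hy : y \in [set u | (w, u) \in del_edge (edges_of e) (a, b)] by rewrite inE.
have Hu' : u \in [set u | (w, u) \in del_edge (edges_of e) (a, b)].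
  by rewrite inE; exact: (@symE_del _ _ (a, b) (symE_edges Hs) u w Huw).
exact: H Hu' Hy.
Qed.

Theorem mainTheorem6 (T : finType) (e : rel T) :
  simple_graph e -> pruned e ->
  (cat_num e = 2 <->
   graph_iso e (@cycle_rel 3) \/ graph_iso e (@path_rel 3) \/ graph_iso e (@path_rel 4)).
Proof.
move=> Hg Hpr; have [Hi Hs] := Hg; have [Hc _] := Hpr.
have HS := symE_edges Hs; have HI := irrE_edges Hi.
split.
- move=> H2.
  have Hle : forall u, cat_v e u <= 2 by move=> u; rewrite -H2; exact: leq_bigmax.
  have [u Hu] : exists u, 2 <= cat_v e u.
    case: (boolP [exists u, 2 <= cat_v e u]) => [/existsP //|/existsPn Hn].
    have : cat_num e <= 1 by apply/bigmax_leqP => v _; rewrite leqNgt Hn.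
    by rewrite H2.
  have Hdu : 1 < gdeg e u.
    rewrite ltnNge; apply/negP => H; move: Hu; rewrite /cat_v.
    by rewrite leqNgt ltnS catv_le1 // deg_eq.
  case/card_gt1P: Hdu => v1 [v2 [Hv1 Hv2 Hv]]; rewrite !inE in Hv1 Hv2.
  have HE3 := card_E3 Hs Hi Hv Hv1 Hv2.
  have Hgood : forall w, goodb (edges_of e) w.
    move=> w; case: (boolP (goodb (edges_of e) w)) => // Hn; exfalso.
    have Hex : exists p, p \in edges_of e by exists (u, v1); rewrite inE.
    have := catv_ge3 HS HI HE3 Hex Hn; move: (Hle w); rewrite /cat_v => Hw H3.
    by move: (leq_trans H3 Hw).
  have Hcl := classify Hi Hs Hc (prunedN_of Hg Hpr).
  case: Hcl.
  + move=> w w1 w2 Hw Hw1 Hw2.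
    have [a [b [Hab HF Hst]]] := goodb_graph Hs Hi (Hgood w).
    exact: Lu Hi Hs Hc (prunedN_of Hg Hpr) HF Hab Hst Hw Hw1 Hw2.
  + by exists u, v1, v2.
  + by move/isoC3; left.
  + by case=> [/isoP3|/isoP4]; right; [left|right].
- move=> Hiso.
  have [H1 H2] : (exists u v1 v2, [/\ v1 != v2, e u v1 & e u v2]) /\
     forall u, exists a b, e a b /\ forall w z1 z2, w != u -> Fr e a b w z1 -> Fr e a b w z2 -> z1 = z2.
    case: Hiso => [H|[H|H]].
    + by split; [apply: (c1_transfer (s:=s3) H) | apply: c2_transfer s3P H _]; vm_compute.
    + by split; [apply: (c1_transfer (s:=s3) H) | apply: c2_transfer s3P H _]; vm_compute.
    + by split; [apply: (c1_transfer (s:=s4) H) | apply: c2_transfer s4P H _]; vm_compute.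
  case: H1 => u [v1 [v2 [Hv Hv1 Hv2]]].
  have HE3 := card_E3 Hs Hi Hv Hv1 Hv2.
  apply/eqP; rewrite eqn_leq; apply/andP; split.
    apply/bigmax_leqP => w _; rewrite /cat_v; apply: catv_le2.
    have [a [b [Hab Hu]]] := H2 w.
    exists (a, b); first by rewrite inE.
    move=> x Hxw; apply/card_le1_eqP => z1 z2; rewrite !inE => Hz1 Hz2.
    by apply/esym; apply: (Hu x z1 z2 Hxw); rewrite -del_Fr !inE.
  apply: leq_trans (leq_bigmax u); rewrite /cat_v; apply: catv_ge2 => //.
    exact: leq_trans HE3.
  rewrite deg_eq; apply/card_gt1P; exists v1, v2; by rewrite !inE.
Qed.
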